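(* Each of $P_3$, $P_4$ and $C_4$ is $T_1$-Tur\'an-good; that is, for each $H\in\{P_3,P_4,C_4\}$ there is $n_0$ such that $\mathrm{ex}(n,H,T_1)=\mathcal{N}(H,T_2(n))$ for all $n\ge n_0$.
   Context: $P_k$ is the path on $k$ vertices, $C_4$ the cycle on $4$ vertices, and $T_1$ (the paw) is the graph consisting of a triangle and one further vertex joined to exactly one vertex of the triangle. $T_2(n)$ is the complete bipartite graph on $n$ vertices with parts of sizes $\lfloor n/2\rfloor$ and $\lceil n/2\rceil$. For graphs $H,G$, $\mathcal{N}(H,G)$ is the number of subgraphs of $G$ isomorphic to $H$, and $\mathrm{ex}(n,H,F)$ is the maximum of $\mathcal{N}(H,G)$ over $F$-free graphs $G$ on $n$ vertices. *)

(* Defs.v *)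
(* Simple graphs are symmetric irreflexive boolean relations
   on a finite vertex type. *)
From mathcomp Require Import all_boot all_order.
Set Implicit Arguments. Unset Strict Implicit. Unset Printing Implicit Defensive.

Definition edges (V : finType) (g : rel V) : {set {set V}} :=
  [set [set x; y] | x in V, y in V & g x y].

Section Graphs.
Variables (U V : finType).


(* (S, F) is a subgraph of G (vertex set S, edge set F) isomorphic to H:
   F is a set of edges of G, and some bijection f : V(H) -> S maps the
   edge set of H exactly onto F. *)
Definition is_copy (h : rel U) (g : rel V) (p : {set V} * {set {set V}}) : bool :=
  (p.2 \subset edges g) &&
  [exists f : {ffun U -> V},
     [&& injectiveb f, f @: [set: U] == p.1 &
         [set f @: (A : {set U}) | A in edges h] == p.2]].

Definition Nsub (h : rel U) (g : rel V) : nat :=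
  #|[set p : {set V} * {set {set V}} | is_copy h g p]|.

End Graphs.

Definition grel n (G : {ffun 'I_n * 'I_n -> bool}) : rel 'I_n :=
  fun x y => G (x, y).

Definition simpleb n (G : {ffun 'I_n * 'I_n -> bool}) : bool :=
  [forall x, forall y, G (x, y) == G (y, x)] && [forall x, ~~ G (x, x)].

Definition exN (U W : finType) (n : nat) (h : rel U) (f : rel W) : nat :=
  \max_(G : {ffun 'I_n * 'I_n -> bool} | simpleb G && (Nsub f (grel G) == 0))
     Nsub h (grel G).

Definition P3 : rel 'I_3 := fun i j => (i.+1 == j :> nat) || (j.+1 == i :> nat).
Definition P4 : rel 'I_4 := fun i j => (i.+1 == j :> nat) || (j.+1 == i :> nat).
Definition C4 : rel 'I_4 := fun i j =>
  [|| i.+1 == j :> nat, j.+1 == i :> nat,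
      (i == 0 :> nat) && (j == 3 :> nat) | (i == 3 :> nat) && (j == 0 :> nat)].
(* T1 (paw): triangle 0,1,2 plus vertex 3 adjacent to 0 only *)
Definition paw : rel 'I_4 := fun i j =>
  (i != j) && (((i < 3) && (j < 3)) || ((i == 0 :> nat) && (j == 3 :> nat))
                || ((i == 3 :> nat) && (j == 0 :> nat))).

Definition T2 (n : nat) : rel 'I_n := fun i j => (i < n./2) != (j < n./2).
Arguments T2 n%_nat_scope _ _ : clear implicits.

(* Main.v *)
Require Import Defs.
From mathcomp Require Import all_boot all_order.
From mathcomp Require Import zify.
From Stdlib Require Import FunctionalExtensionality.
Set Implicit Arguments. Unset Strict Implicit. Unset Printing Implicit Defensive.
Module A.

Section Emb.
Variables (U V : finType) (h : rel U) (g : rel V).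

Definition embset := [set f : {ffun U -> V} | injectiveb f &&
   ([set f @: (A : {set U}) | A in edges h] \subset edges g)].
Definition autset := [set s : {ffun U -> U} | injectiveb s &&
   ([set s @: (A : {set U}) | A in edges h] == edges h)].
Definition phi (f : {ffun U -> V}) : {set V} * {set {set V}} :=
  (f @: [set: U], [set f @: (A : {set U}) | A in edges h]).

Lemma imset_imset (W : finType) (f : U -> W) (s : U -> U) (X : {set {set U}}) :
  [set (fun u => f (s u)) @: (A : {set U}) | A in X] =
  [set f @: (B : {set U}) | B in [set s @: (A : {set U}) | A in X]].
Proof.
rewrite -imset_comp; apply: eq_imset => A /=.
by rewrite -imset_comp.
Qed.

Lemma fiber (f0 : {ffun U -> V}) : f0 \in embset ->
  [set f in embset | phi f == phi f0] = [set [ffun u => f0 (s u)] | s : {ffun U -> U} in autset].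
Proof.
rewrite inE => /andP[/injectiveP inj0 sub0].
apply/setP => f; apply/idP/idP.
- rewrite !inE => /andP[/andP[/injectiveP injf subf] /eqP [e1 e2]].
  have ex u : exists w, f0 w == f u.
    have : f u \in f @: [set: U] by apply: imset_f.
    by rewrite e1 => /imsetP[w _ ->]; exists w.
  pose s := [ffun u => odflt u [pick w | f0 w == f u]].
  have sP u : f0 (s u) = f u.
    rewrite ffunE; case: pickP => [w /eqP //|].
    by case: (ex u) => w Hw /(_ w); rewrite Hw.
  have fE : f = [ffun u => f0 (s u)] by apply/ffunP => u; rewrite ffunE sP.
  apply/imsetP; exists s => //.
  rewrite inE; apply/andP; split.
    by apply/injectiveP => x y /(congr1 f0); rewrite !sP => /injf.
  apply/eqP; apply: (imset_inj (imset_inj inj0)).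
  rewrite -imset_imset -e2 fE; apply: eq_imset => A /=.
  by apply: eq_imset => u; rewrite ffunE.
- case/imsetP => s sin ->; move: sin; rewrite /autset inE => /andP[/injectiveP injs /eqP es].
  have e0 : [set [ffun u => f0 (s u)] @: (A : {set U}) | A in edges h] =
            [set f0 @: (A : {set U}) | A in edges h].
    rewrite -{2}es -imset_imset; apply: eq_imset => A /=.
    by apply: eq_imset => u; rewrite ffunE.
  rewrite inE; apply/andP; split; last first.
    rewrite /phi e0 xpair_eqE eqxx andbT.
    apply/eqP; apply/setP => v; apply/imsetP/imsetP => [[u _ ->]|[u _ ->]].
      by exists (s u) => //; rewrite ffunE.
    have : u \in s @: [set: U].
      have -> : s @: [set: U] = [set: U] by apply/eqP; rewrite eqEcard subsetT (card_imset _ injs) leqnn.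
      by [].
    by case/imsetP => w _ ->; exists w => //; rewrite ffunE.
  rewrite /embset in_set.
  by rewrite e0 sub0 andbT; apply/injectiveP => x y; rewrite !ffunE => /inj0 /injs.
Qed.

Lemma emb_Nsub : #|embset| = #|autset| * Nsub h g.
Proof.
rewrite /Nsub mulnC -sum_nat_const -sum1_card.
rewrite (partition_big phi (fun p => p \in [set p | is_copy h g p])); last first.
  move=> f; rewrite /embset inE => /andP[injf sub]; rewrite inE /is_copy /= sub /=.
  apply/existsP; exists f; by rewrite injf !eqxx.
apply: eq_bigr => p.
rewrite inE /is_copy => /andP[sub /existsP[f /and3P[injf /eqP e1 /eqP e2]]].
have fin : f \in embset by rewrite /embset inE injf e2 sub.
have pE : p = phi f by rewrite /phi e1 e2; case: (p).
rewrite pE sum1dep_card.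
rewrite fiber // card_in_imset // => s1 s2 _ _ /ffunP E.
move/injectiveP: injf => injf.
by apply/ffunP => u; move: (E u); rewrite !ffunE => /injf.
Qed.

Lemma autset_gt0 : 0 < #|autset|.
Proof.
apply/card_gt0P; exists [ffun u => u]; rewrite inE; apply/andP; split.
  by apply/injectiveP => x y; rewrite !ffunE.
apply/eqP; rewrite -[RHS]imset_id; apply: eq_imset => A /=.
rewrite -[RHS]imset_id; apply: eq_imset => u; by rewrite ffunE.
Qed.

End Emb.

End A.
Import A.
Module B.

Lemma imset_pair (U V : finType) (f : U -> V) a b : f @: [set a; b] = [set f a; f b].
Proof. by rewrite imsetU1 imset_set1. Qed.

Lemma set2_eq (V : finType) (u v x y : V) : [set u; v] = [set x; y] ->
  (u = x /\ v = y) \/ (u = y /\ v = x).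
Proof.
move=> E.
have : u \in [set x; y] by rewrite -E set21.
have : v \in [set x; y] by rewrite -E set22.
have : x \in [set u; v] by rewrite E set21.
have : y \in [set u; v] by rewrite E set22.
rewrite !inE => /orP[]/eqP e1 /orP[]/eqP e2 /orP[]/eqP e3 /orP[]/eqP e4; subst; first [by left | by right].
Qed.

Lemma edge_cond (U V : finType) (h : rel U) (g : rel V) (f : U -> V) :
  symmetric g ->
  ([set f @: (A : {set U}) | A in edges h] \subset edges g) =
  [forall a, forall b, h a b ==> g (f a) (f b)].
Proof.
move=> gsym; apply/subsetP/forallP.
- move=> H a; apply/forallP => b; apply/implyP => hab.
  have : f @: [set a; b] \in edges g.
    by apply: H; apply: imset_f; apply/imset2P; exists a b; rewrite ?inE.
  rewrite imset_pair => /imset2P[x y _]; rewrite inE => gxy /set2_eq [[-> ->]|[-> ->]] //.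
  by rewrite gsym.
- move=> H A /imsetP[B /imset2P[a b _ hab ->] ->].
  rewrite imset_pair; apply/imset2P; exists (f a) (f b) => //; rewrite inE.
  by move: hab; rewrite inE; exact: (implyP (forallP (H a) b)).
Qed.

Lemma injb_forall (U V : finType) (f : {ffun U -> V}) :
  injectiveb f = [forall a, forall b, (f a == f b) ==> (a == b)].
Proof.
apply/injectiveP/forallP => [H a|H a b E].
  by apply/forallP => b; apply/implyP => /eqP /H ->.
by move: (forallP (H a) b); rewrite E eqxx => /eqP.
Qed.

Notation o3 k := (@Ordinal 3 k isT).
Notation o4 k := (@Ordinal 4 k isT).

Lemma forall3 (R : 'I_3 -> bool) : [forall a, R a] = [&& R (o3 0), R (o3 1) & R (o3 2)].
Proof.
apply/forallP/and3P => [H|[H0 H1 H2] [[|[|[|k]]] Hk]] //; try by split; apply H.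
- by rewrite (_ : Ordinal Hk = @Ordinal 3 0 isT) //; apply: val_inj.
- by rewrite (_ : Ordinal Hk = @Ordinal 3 1 isT) //; apply: val_inj.
- by rewrite (_ : Ordinal Hk = @Ordinal 3 2 isT) //; apply: val_inj.
Qed.

Lemma forall4 (R : 'I_4 -> bool) : [forall a, R a] = [&& R (o4 0), R (o4 1), R (o4 2) & R (o4 3)].
Proof.
apply/forallP/and4P => [H|[H0 H1 H2 H3] [[|[|[|[|k]]]] Hk]] //; try by split; apply H.
- by rewrite (_ : Ordinal Hk = @Ordinal 4 0 isT) //; apply: val_inj.
- by rewrite (_ : Ordinal Hk = @Ordinal 4 1 isT) //; apply: val_inj.
- by rewrite (_ : Ordinal Hk = @Ordinal 4 2 isT) //; apply: val_inj.
- by rewrite (_ : Ordinal Hk = @Ordinal 4 3 isT) //; apply: val_inj.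
Qed.

Section Card.
Variable V : finType.

Lemma card_ffun3 (Q : V -> V -> V -> bool) :
  #|[set f : {ffun 'I_3 -> V} | Q (f (o3 0)) (f (o3 1)) (f (o3 2))]| =
  \sum_x \sum_y \sum_z (Q x y z : nat).
Proof.
pose ph (f : {ffun 'I_3 -> V}) := (f (o3 0), (f (o3 1), f (o3 2))).
have phi_inj : injective ph.
  move=> f1 f2 [e0 e1 e2]; apply/ffunP => -[[|[|[|k]]] Hk] //.
  - by rewrite (_ : Ordinal Hk = @Ordinal 3 0 isT) //; apply: val_inj.
  - by rewrite (_ : Ordinal Hk = @Ordinal 3 1 isT) //; apply: val_inj.
  - by rewrite (_ : Ordinal Hk = @Ordinal 3 2 isT) //; apply: val_inj.
rewrite -(card_imset _ phi_inj).
have -> : ph @: [set f : {ffun 'I_3 -> V} | Q (f (o3 0)) (f (o3 1)) (f (o3 2))] =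
          [set t | Q t.1 t.2.1 t.2.2].
  apply/setP => t; rewrite inE; apply/imsetP/idP => [[f]|Ht].
    by rewrite inE => Hf ->.
  exists [ffun i : 'I_3 => if val i == 0 then t.1 else if val i == 1 then t.2.1 else t.2.2].
    by rewrite inE !ffunE.
  by rewrite /ph !ffunE /=; case: t Ht => ? [].
rewrite -sum1_card big_mkcond /=; symmetry.
under eq_bigr do rewrite pair_bigA.
rewrite pair_bigA; apply: eq_bigr => t _; rewrite inE; by case: (Q _ _ _).
Qed.

Lemma card_ffun4 (Q : V -> V -> V -> V -> bool) :
  #|[set f : {ffun 'I_4 -> V} | Q (f (o4 0)) (f (o4 1)) (f (o4 2)) (f (o4 3))]| =
  \sum_x \sum_y \sum_z \sum_w (Q x y z w : nat).
Proof.
pose ph (f : {ffun 'I_4 -> V}) := (f (o4 0), (f (o4 1), (f (o4 2), f (o4 3)))).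
have phi_inj : injective ph.
  move=> f1 f2 [e0 e1 e2 e3]; apply/ffunP => -[[|[|[|[|k]]]] Hk] //.
  - by rewrite (_ : Ordinal Hk = @Ordinal 4 0 isT) //; apply: val_inj.
  - by rewrite (_ : Ordinal Hk = @Ordinal 4 1 isT) //; apply: val_inj.
  - by rewrite (_ : Ordinal Hk = @Ordinal 4 2 isT) //; apply: val_inj.
  - by rewrite (_ : Ordinal Hk = @Ordinal 4 3 isT) //; apply: val_inj.
rewrite -(card_imset _ phi_inj).
have -> : ph @: [set f : {ffun 'I_4 -> V} | Q (f (o4 0)) (f (o4 1)) (f (o4 2)) (f (o4 3))] =
          [set t | Q t.1 t.2.1 t.2.2.1 t.2.2.2].
  apply/setP => t; rewrite inE; apply/imsetP/idP => [[f]|Ht].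
    by rewrite inE => Hf ->.
  exists [ffun i : 'I_4 => if val i == 0 then t.1 else if val i == 1 then t.2.1
                           else if val i == 2 then t.2.2.1 else t.2.2.2].
    by rewrite inE !ffunE.
  by rewrite /ph !ffunE /=; case: t Ht => ? [? []].
rewrite -sum1_card big_mkcond /=; symmetry.
under eq_bigr do under eq_bigr do rewrite pair_bigA.
under eq_bigr do rewrite pair_bigA.
rewrite pair_bigA; apply: eq_bigr => t _; rewrite inE; by case: (Q _ _ _ _).
Qed.
End Card.

End B.
Import B.
Module C.

Lemma ordeq n i j Hi Hj : (@Ordinal n i Hi == @Ordinal n j Hj) = eqn i j.
Proof. by []. Qed.

Ltac boolcase g := repeat match goal with
  | |- context [?a == ?b] => case: (a == b)
  | |- context [g ?a ?b] => case: (g a b)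
  end.

Section PerH.
Variables (V : finType) (g : rel V).
Hypotheses (gsym : symmetric g) (girr : irreflexive g).

Lemma embP3 : #|embset P3 g| =
  \sum_x \sum_y \sum_z ([&& x != y, x != z, y != z, g x y & g y z] : nat).
Proof.
rewrite -card_ffun3; apply: eq_card => f; rewrite /embset !inE edge_cond // injb_forall.
rewrite !forall3 /P3 /= !ordeq /=.
set x := f (o3 0); set y := f (o3 1); set z := f (o3 2).
rewrite (gsym y x) (gsym z y) (eq_sym y x) (eq_sym z x) (eq_sym z y) !eqxx /=.
by boolcase g.
Qed.
Lemma embP4 : #|embset P4 g| =
  \sum_x0 \sum_x1 \sum_x2 \sum_x3 ([&& x0 != x1, x0 != x2, x0 != x3, x1 != x2, x1 != x3, x2 != x3 & [&& g x0 x1, g x1 x2 & g x2 x3]] : nat).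
Proof.
rewrite -card_ffun4; apply: eq_card => f; rewrite /embset !inE edge_cond // injb_forall.
rewrite !forall4 /P4 /= !ordeq /=.
set x0 := f (o4 0); set x1 := f (o4 1); set x2 := f (o4 2); set x3 := f (o4 3).
rewrite ?(gsym x1 x0) ?(gsym x2 x0) ?(gsym x3 x0) ?(gsym x2 x1) ?(gsym x3 x1) ?(gsym x3 x2) ?(eq_sym x1 x0) ?(eq_sym x2 x0) ?(eq_sym x3 x0) ?(eq_sym x2 x1) ?(eq_sym x3 x1) ?(eq_sym x3 x2) !eqxx /=.
by boolcase g.
Qed.

Lemma embC4 : #|embset C4 g| =
  \sum_x0 \sum_x1 \sum_x2 \sum_x3 ([&& x0 != x1, x0 != x2, x0 != x3, x1 != x2, x1 != x3, x2 != x3 & [&& g x0 x1, g x1 x2, g x2 x3 & g x0 x3]] : nat).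
Proof.
rewrite -card_ffun4; apply: eq_card => f; rewrite /embset !inE edge_cond // injb_forall.
rewrite !forall4 /C4 /= !ordeq /=.
set x0 := f (o4 0); set x1 := f (o4 1); set x2 := f (o4 2); set x3 := f (o4 3).
rewrite ?(gsym x1 x0) ?(gsym x2 x0) ?(gsym x3 x0) ?(gsym x2 x1) ?(gsym x3 x1) ?(gsym x3 x2) ?(eq_sym x1 x0) ?(eq_sym x2 x0) ?(eq_sym x3 x0) ?(eq_sym x2 x1) ?(eq_sym x3 x1) ?(eq_sym x3 x2) !eqxx /=.
by boolcase g.
Qed.

Lemma embpaw : #|embset paw g| =
  \sum_x0 \sum_x1 \sum_x2 \sum_x3 ([&& x0 != x1, x0 != x2, x0 != x3, x1 != x2, x1 != x3, x2 != x3 & [&& g x0 x1, g x0 x2, g x1 x2 & g x0 x3]] : nat).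
Proof.
rewrite -card_ffun4; apply: eq_card => f; rewrite /embset !inE edge_cond // injb_forall.
rewrite !forall4 /paw /= !ordeq /=.
set x0 := f (o4 0); set x1 := f (o4 1); set x2 := f (o4 2); set x3 := f (o4 3).
rewrite ?(gsym x1 x0) ?(gsym x2 x0) ?(gsym x3 x0) ?(gsym x2 x1) ?(gsym x3 x1) ?(gsym x3 x2) ?(eq_sym x1 x0) ?(eq_sym x2 x0) ?(eq_sym x3 x0) ?(eq_sym x2 x1) ?(eq_sym x3 x1) ?(eq_sym x3 x2) !eqxx /=.
by boolcase g.
Qed.

End PerH.

End C.
Import C.
Module D.

Lemma amgm a b : 2 * (a * b) <= a * a + b * b.
Proof.
wlog le : a b / a <= b.
  move=> W; case: (leqP a b) => [|] h; first exact: W.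
  by rewrite (mulnC a b) addnC; apply: W; apply: ltnW.
rewrite -(subnK le); move: (b - a) => k; nia.
Qed.

Lemma le_sum (T : finType) (F : T -> nat) i : F i <= \sum_j F j.
Proof. by rewrite (bigD1 i) //= leq_addr. Qed.

Section Deg.
Variables (V : finType) (g : rel V).
Hypotheses (gsym : symmetric g) (girr : irreflexive g).

Definition d x := #|[set y | g x y]|.
Definition D := \sum_x d x.

Lemma degE x : d x = \sum_y (g x y : nat).
Proof. by rewrite /d -sum1dep_card big_mkcond /=; apply: eq_bigr => y _; case: (g x y). Qed.

Lemma sum_del y x : \sum_z ((g y z && (x != z)) : nat) = d y - g y x.
Proof.
rewrite degE (bigD1 x) //= (bigD1 x (P := predT)) //= eqxx andbF add0n addKn.
by apply: eq_bigr => z /negPf; rewrite eq_sym => ->; rewrite andbT.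
Qed.

Lemma sumsq (H : forall x y, g x y -> d x + d y <= #|V|) :
  2 * \sum_x (d x * d x) <= #|V| * D.
Proof.
have e1 : \sum_x d x * d x = \sum_x \sum_y (g x y : nat) * d x.
  by apply: eq_bigr => x _; rewrite {1}degE big_distrl.
have e2 : \sum_x \sum_y (g x y : nat) * d x = \sum_x \sum_y (g x y : nat) * d y.
  by rewrite exchange_big; apply: eq_bigr => x _; apply: eq_bigr => y _; rewrite gsym.
rewrite mul2n -addnn {1}e1 e2 e1 -big_split /= /D big_distrr /=.
apply: leq_sum => x _; rewrite -big_split /= [in X in _ <= X](degE x) big_distrr /=.
apply: leq_sum => y _; rewrite -mulnDr mulnC; case E: (g x y) => /=.
  by rewrite ?mul1n ?muln1 addnC; apply: H.
by rewrite !muln0.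
Qed.

Lemma cauchy : D * D <= #|V| * \sum_x (d x * d x).
Proof.
rewrite -(leq_pmul2l (isT : 0 < 2)).
have -> : 2 * (D * D) = \sum_x \sum_y 2 * (d x * d y).
  rewrite /D big_distrl big_distrr /=; apply: eq_bigr => x _.
  by rewrite big_distrr big_distrr /=; apply: eq_bigr => y _.
apply: (@leq_trans (\sum_x \sum_y (d x * d x + d y * d y))).
  by apply: leq_sum => x _; apply: leq_sum => y _; apply: amgm.
rewrite mulnA (mulnC 2) -mulnA mul2n -addnn mulnDr.
under eq_bigr do rewrite big_split; rewrite big_split /=; apply: leq_add.
  by rewrite big_distrr /=; apply: leq_sum => x _; rewrite sum_nat_const cardE.
by rewrite -sum_nat_const exchange_big /=.
Qed.
End Deg.

End D.
Import D.
Module E.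

Lemma half_cases n : exists k, (n = k.*2 /\ n./2 = k /\ n - n./2 = k) \/
                              (n = k.*2.+1 /\ n./2 = k /\ n - n./2 = k.+1).
Proof.
exists n./2; case/boolP: (odd n) => o; [right|left].
  have e : n = (n./2).*2.+1 by rewrite -[n in LHS]odd_double_half o.
  split=> //; split=> //; lia.
have e : n = (n./2).*2 by rewrite -[n in LHS]odd_double_half (negPf o).
split=> //; split=> //; lia.
Qed.

Lemma prod_bound n p q : p + q <= n -> 0 < p -> 0 < q ->
  p.-1 * q.-1 <= (n./2).-1 * (n - n./2).-1.
Proof.
move=> H1 H2 H3; case: (half_cases n) => k [[e1 [-> ->]]|[e1 [-> ->]]].
  by case: (leqP p k) => hp; nia.
by case: (leqP p k) => hp; nia.
Qed.

Lemma sq_bound n : n * n <= 4 * (n./2 * (n - n./2)) + 1.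
Proof. by case: (half_cases n) => k [[e1 [-> ->]]|[e1 [-> ->]]]; nia. Qed.

Lemma half_sum n : n./2 + (n - n./2) = n.
Proof. by case: (half_cases n) => k [[e1 [-> ->]]|[e1 [-> ->]]]; lia. Qed.

Section G.
Variables (V : finType) (g : rel V).
Hypotheses (gsym : symmetric g) (girr : irreflexive g).
Local Notation n := #|V|.
Local Notation d := (d g).
Local Notation D := (D g).

Lemma mantel (H : forall x y, g x y -> d x + d y <= n) :
  D <= 2 * (n./2 * (n - n./2)).
Proof.
have h1 := sumsq gsym H. have h2 := cauchy g. have h3 := sq_bound n.
case: (posnP D) => [->//|Dpos].
have : 2 * D * D <= n * n * D.
  rewrite -mulnA. apply: (leq_trans (leq_mul (leqnn 2) h2)).
  by rewrite mulnCA -mulnA leq_mul2l h1 orbT.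
rewrite leq_pmul2r // => h4. nia.
Qed.

Lemma P3count : \sum_x \sum_y \sum_z ([&& x != y, x != z, y != z, g x y & g y z] : nat)
  = \sum_y d y * (d y).-1.
Proof.
rewrite exchange_big; apply: eq_bigr => y _.
have -> : \sum_x \sum_z ([&& x != y, x != z, y != z, g x y & g y z] : nat) =
          \sum_x (g y x : nat) * \sum_z ((g y z && (x != z)) : nat).
  apply: eq_bigr => x _; rewrite big_distrr; apply: eq_bigr => z _ /=.
  rewrite (gsym x y); case gyx: (g y x); last by rewrite /= !andbF.
  have -> : x != y by apply/eqP => e; move: gyx; rewrite e girr.
  case gyz: (g y z); last by rewrite /= !andbF.
  have -> : y != z by apply/eqP => e; move: gyz; rewrite e girr.
  by rewrite /= !andbT mul1n.
rewrite (eq_bigr (fun x => (g y x : nat) * (d y - g y x))); last by move=> x _; rewrite sum_del.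
rewrite (_ : d y * _ = \sum_x (g y x : nat) * (d y).-1); last by rewrite -big_distrl /= -degE.
by apply: eq_bigr => x _; case: (g y x) => //=; rewrite subn1.
Qed.

Lemma P3bound (H : forall x y, g x y -> d x + d y <= n) :
  \sum_y d y * (d y).-1 <= (n - 2) * (n./2 * (n - n./2)).
Proof.
have h1 := sumsq gsym H. have h2 := mantel H.
have e : \sum_y d y * (d y).-1 + D = \sum_x d x * d x.
  rewrite /D -big_split /=; apply: eq_bigr => x _; case: (d x) => // k; lia.
set E := \sum_y _ in e *.
set S := \sum_x _ in h1 e.
have h3 : (n - 2) * D <= (n - 2) * (2 * (n./2 * (n - n./2))) by rewrite leq_mul2l h2 orbT.
nia.
Qed.

Lemma quad_sum (R : V -> V -> V -> V -> nat) :
  \sum_x0 \sum_x1 \sum_x2 \sum_x3 R x0 x1 x2 x3 =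
  \sum_x1 \sum_x2 \sum_x0 \sum_x3 R x0 x1 x2 x3.
Proof. by rewrite exchange_big; apply: eq_bigr => x1 _; rewrite exchange_big. Qed.

Definition Rq x0 x1 x2 x3 : nat :=
  (g x1 x2 : nat) * (((g x1 x0 && (x2 != x0)) : nat) * ((g x2 x3 && (x1 != x3)) : nat)).

Lemma Rq_sum : \sum_x0 \sum_x1 \sum_x2 \sum_x3 Rq x0 x1 x2 x3 =
  \sum_x1 \sum_x2 (g x1 x2 : nat) * ((d x1).-1 * (d x2).-1).
Proof.
rewrite quad_sum; apply: eq_bigr => x1 _; apply: eq_bigr => x2 _.
rewrite /Rq.
under eq_bigr => x0 _ do rewrite -big_distrr -big_distrr /=.
rewrite -big_distrr -big_distrl /= sum_del sum_del.
by case e: (g x1 x2) => //=; rewrite (gsym x2 x1) e !subn1.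
Qed.

Lemma S_bound (H : forall x y, g x y -> d x + d y <= n) :
  \sum_x1 \sum_x2 (g x1 x2 : nat) * ((d x1).-1 * (d x2).-1) <=
  2 * (n./2 * (n - n./2)) * ((n./2).-1 * (n - n./2).-1).
Proof.
apply: (@leq_trans (D * ((n./2).-1 * (n - n./2).-1))); last by rewrite leq_mul2r mantel ?orbT.
rewrite /D big_distrl /=; apply: leq_sum => x1 _.
rewrite [in X in _ <= X](degE g x1) big_distrl /=; apply: leq_sum => x2 _.
case e: (g x1 x2) => //=; rewrite !mul1n; apply: prod_bound; first exact: (H _ _ e).
  by rewrite /D.d; apply/card_gt0P; exists x2; rewrite inE.
by rewrite /D.d; apply/card_gt0P; exists x1; rewrite inE gsym.
Qed.

End G.

End E.
Import E.
Module F.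

Lemma RqE (V : finType) (g : rel V) x0 x1 x2 x3 :
  Rq g x0 x1 x2 x3 = [&& g x1 x2, g x1 x0 && (x2 != x0) & g x2 x3 && (x1 != x3)].
Proof. by rewrite /Rq; case: (g x1 x2); case: (_ && _); case: (_ && _). Qed.

Lemma sum4_ge (V : finType) (F : V -> V -> V -> V -> nat) x0 x1 x2 x3 :
  F x0 x1 x2 x3 <= \sum_y0 \sum_y1 \sum_y2 \sum_y3 F y0 y1 y2 y3.
Proof.
apply: (leq_trans _ (le_sum _ x0)); apply: (leq_trans _ (le_sum _ x1)).
apply: (leq_trans _ (le_sum _ x2)); exact: (le_sum _ x3).
Qed.

Section PawFree.
Variables (V : finType) (g : rel V).
Hypotheses (gsym : symmetric g) (girr : irreflexive g).
Hypothesis nopaw : #|embset paw g| = 0.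
Local Notation d := (d g).

Lemma neq_g a b : g a b -> a != b.
Proof. by move=> gab; apply/eqP => e; move: gab; rewrite e girr. Qed.

Lemma tri_deg x y w : g x y -> g x w -> g y w -> d x <= 2.
Proof.
move=> gxy gxw gyw; rewrite leqNgt; apply/negP => h3.
set N := [set z | g x z].
have c1 := cardsD1 y N; have c2 := cardsD1 w (N :\ y).
have : 0 < #|N :\ y :\ w|.
  move: h3; rewrite /D.d -/N c1 c2.
  by case: (y \in N); case: (w \in N :\ y) => /=; lia.
case/card_gt0P => z; rewrite !inE => /and3P[hzw hzy gxz].
have := sum4_ge (fun x0 x1 x2 x3 => ([&& x0 != x1, x0 != x2, x0 != x3, x1 != x2, x1 != x3, x2 != x3 &
   [&& g x0 x1, g x0 x2, g x1 x2 & g x0 x3]] : nat)) x y w z.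
rewrite -embpaw // nopaw leqn0 neq_g // neq_g // neq_g // neq_g //.
by rewrite (eq_sym y z) hzy (eq_sym w z) hzw gxy gxw gyw gxz.
Qed.

Lemma deg_sum : 4 <= #|V| -> forall x y, g x y -> d x + d y <= #|V|.
Proof.
move=> n4 x y gxy.
case: (pickP (fun w => g x w && g y w)) => [w /andP[gxw gyw]|none].
  have h1 := tri_deg gxy gxw gyw.
  have gyx : g y x by rewrite gsym.
  have h2 := tri_deg gyx gyw gxw.
  by apply: leq_trans n4; apply: (leq_add h1 h2).
have e : [set z | g x z] :&: [set z | g y z] = set0.
  by apply/setP => z; rewrite !inE none.
have := cardsUI [set z | g x z] [set z | g y z]; rewrite e cards0 addn0 => <-.
exact: max_card.
Qed.
End PawFree.

Section T2s.
Variables (V : finType) (s : V -> bool).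
Definition tr : rel V := fun x y => s x != s y.
Local Notation A := #|[set x | s x]|.
Local Notation B := #|[set x | ~~ s x]|.

Lemma tsym : symmetric tr.
Proof. by move=> x y; rewrite /tr eq_sym. Qed.
Lemma tirr : irreflexive tr.
Proof. by move=> x; rewrite /tr eqxx. Qed.

Lemma degT x : d tr x = if s x then B else A.
Proof.
rewrite /D.d; case sx: (s x); apply: eq_card => y; rewrite !inE /tr sx; by case: (s y).
Qed.

Lemma split_sum (F : V -> nat) : \sum_x F x = \sum_(x | s x) F x + \sum_(x | ~~ s x) F x.
Proof. exact: bigID. Qed.

Lemma DT : D tr = 2 * (A * B).
Proof.
rewrite /D.D split_sum.
rewrite (eq_bigr (fun _ => B)); last by move=> x sx; rewrite degT sx.
rewrite [X in _ + X](eq_bigr (fun _ => A)); last by move=> x /negPf sx; rewrite degT sx.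
rewrite !sum_nat_cond_const; lia.
Qed.

Lemma P3T : \sum_y d tr y * (d tr y).-1 = A * (B * B.-1) + B * (A * A.-1).
Proof.
rewrite split_sum.
rewrite (eq_bigr (fun _ => B * B.-1)); last by move=> x sx; rewrite degT sx.
rewrite [X in _ + X](eq_bigr (fun _ => A * A.-1)); last by move=> x /negPf sx; rewrite degT sx.
by rewrite !sum_nat_cond_const.
Qed.

Lemma ST : \sum_x1 \sum_x2 (tr x1 x2 : nat) * ((d tr x1).-1 * (d tr x2).-1) =
  2 * (A * B) * (A.-1 * B.-1).
Proof.
rewrite -DT /D.D big_distrl /=; apply: eq_bigr => x1 _.
rewrite [in X in _ = X](degE tr x1) big_distrl /=; apply: eq_bigr => x2 _.
rewrite /tr !degT; case: (s x1); case: (s x2) => /=; first [done | by rewrite [_.-1 * _]mulnC].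
Qed.

Lemma trans3 x0 x1 x2 x3 : tr x1 x0 -> tr x1 x2 -> tr x2 x3 -> tr x0 x3.
Proof. by rewrite /tr; case: (s x0); case: (s x1); case: (s x2); case: (s x3). Qed.

Lemma neq_t a b : tr a b -> a != b.
Proof. by move=> h; apply/eqP => e; move: h; rewrite e tirr. Qed.

Lemma P4T x0 x1 x2 x3 :
  ([&& x0 != x1, x0 != x2, x0 != x3, x1 != x2, x1 != x3, x2 != x3 &
      [&& tr x0 x1, tr x1 x2 & tr x2 x3]] : nat) = Rq tr x0 x1 x2 x3.
Proof.
rewrite RqE; congr nat_of_bool; apply/idP/idP.
  case/and5P => h01 h02 h03 h12 /andP[h13 /andP[h23 /and3P[e01 e12 e23]]].
  by rewrite e12 e23 tsym e01 eq_sym h02 h13.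
case/andP => e12 /andP[/andP[e10 h20] /andP[e23 h13]].
have e03 := trans3 e10 e12 e23.
have e01 : tr x0 x1 by rewrite tsym.
by rewrite (neq_t e01) (neq_t e03) (eq_sym x0 x2) h20 h13 (neq_t e12) (neq_t e23) e12 e23 e01.
Qed.

Lemma C4T x0 x1 x2 x3 :
  ([&& x0 != x1, x0 != x2, x0 != x3, x1 != x2, x1 != x3, x2 != x3 &
      [&& tr x0 x1, tr x1 x2, tr x2 x3 & tr x0 x3]] : nat) = Rq tr x0 x1 x2 x3.
Proof.
rewrite -P4T; congr nat_of_bool.
case: (tr x0 x1) / idP => e01; last by rewrite /= !andbF.
case: (tr x1 x2) / idP => e12; last by rewrite /= !andbF.
case: (tr x2 x3) / idP => e23; last by rewrite /= !andbF.
have e10 : tr x1 x0 by rewrite tsym.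
by rewrite (trans3 e10 e12 e23).
Qed.

Lemma pawT x0 x1 x2 x3 :
  [&& x0 != x1, x0 != x2, x0 != x3, x1 != x2, x1 != x3, x2 != x3 &
      [&& tr x0 x1, tr x0 x2, tr x1 x2 & tr x0 x3]] = false.
Proof.
apply/negP => /and5P[_ _ _ _ /andP[_ /andP[_ /and4P[]]]].
by rewrite /tr; case: (s x0); case: (s x1); case: (s x2).
Qed.
End T2s.

End F.
Import F.
Module G.

Section Final.
Variable n : nat.
Definition sT (x : 'I_n) : bool := x < n./2.

Lemma T2E : T2 n = tr sT.
Proof. by []. Qed.

Lemma cardA : #|[set x | sT x]| = n./2.
Proof.
have le : n./2 <= n by rewrite -{2}(odd_double_half n) -addnn addnA leq_addl.
have -> : [set x | sT x] = [set widen_ord le x | x : 'I_n./2].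
  apply/setP => x; rewrite inE /sT; apply/idP/imsetP => [h|[y _ ->]] //=.
  by exists (Ordinal h) => //; apply: val_inj.
by rewrite card_imset ?card_ord // => y1 y2 /(congr1 val) /= e; apply: val_inj.
Qed.

Lemma cardB : #|[set x | ~~ sT x]| = n - n./2.
Proof.
have := cardsC [set x | sT x]; rewrite cardA card_ord.
have -> : ~: [set x | sT x] = [set x | ~~ sT x] by apply/setP => x; rewrite !inE.
lia.
Qed.

Variable (G : {ffun 'I_n * 'I_n -> bool}).
Hypothesis simp : simpleb G.
Hypothesis nop : Nsub paw (Defs.grel G) = 0.
Hypothesis n4 : 4 <= n.

Let g := Defs.grel G.
Lemma gsym : symmetric g.
Proof. move: simp => /andP[/forallP h _] x y; exact: (eqP (forallP (h x) y)). Qed.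
Lemma girr : irreflexive g.
Proof. move: simp => /andP[_ /forallP h] x; exact: (negPf (h x)). Qed.

Lemma nopawE : #|embset paw g| = 0.
Proof. by rewrite emb_Nsub nop muln0. Qed.

Lemma degH : forall x y, g x y -> d g x + d g y <= #|'I_n|.
Proof. apply: deg_sum; [exact: gsym | exact: girr | exact: nopawE | by rewrite card_ord]. Qed.

Lemma cmpP3 : #|embset P3 g| <= #|embset P3 (T2 n)|.
Proof.
rewrite (embP3 gsym) T2E (embP3 (@tsym _ sT)) (P3count gsym girr) (P3count (@tsym _ sT) (@tirr _ sT)).
rewrite P3T cardA cardB.
apply: (leq_trans (P3bound gsym degH)); rewrite card_ord.
have := half_sum n; set a := n./2; set b := n - n./2 => hab.
rewrite -hab; case: a hab => [|a]; case: b => [|b] _ /=; nia.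
Qed.

Lemma Ssum_le (Q : 'I_n -> 'I_n -> 'I_n -> 'I_n -> bool) :
  (forall x0 x1 x2 x3, Q x0 x1 x2 x3 ->
     [&& g x1 x2, g x1 x0 && (x2 != x0) & g x2 x3 && (x1 != x3)]) ->
  \sum_x0 \sum_x1 \sum_x2 \sum_x3 (Q x0 x1 x2 x3 : nat) <=
  \sum_x0 \sum_x1 \sum_x2 \sum_x3 Rq g x0 x1 x2 x3.
Proof.
move=> HQ; do 4!(apply: leq_sum => ? _).
rewrite RqE; case: (Q _ _ _ _) / idP => // /HQ -> //.
Qed.

Lemma fin4 : \sum_x0 \sum_x1 \sum_x2 \sum_x3 Rq g x0 x1 x2 x3 <=
  \sum_x0 \sum_x1 \sum_x2 \sum_x3 Rq (T2 n) x0 x1 x2 x3.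
Proof.
rewrite (Rq_sum gsym) T2E (Rq_sum (@tsym _ sT)) ST cardA cardB.
by apply: (leq_trans (S_bound gsym degH)); rewrite card_ord.
Qed.

Lemma cmpP4 : #|embset P4 g| <= #|embset P4 (T2 n)|.
Proof.
rewrite (embP4 gsym) T2E (embP4 (@tsym _ sT)).
under [X in _ <= X]eq_bigr do under eq_bigr do under eq_bigr do under eq_bigr do rewrite P4T.
apply: (leq_trans _ fin4); apply: Ssum_le => x0 x1 x2 x3.
case/and5P => h01 h02 h03 h12 /andP[h13 /andP[h23 /and3P[e01 e12 e23]]].
by rewrite e12 e23 gsym e01 eq_sym h02 h13.
Qed.

Lemma cmpC4 : #|embset C4 g| <= #|embset C4 (T2 n)|.
Proof.
rewrite (embC4 gsym) T2E (embC4 (@tsym _ sT)).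
under [X in _ <= X]eq_bigr do under eq_bigr do under eq_bigr do under eq_bigr do rewrite C4T.
apply: (leq_trans _ fin4); apply: Ssum_le => x0 x1 x2 x3.
case/and5P => h01 h02 h03 h12 /andP[h13 /andP[h23 /and4P[e01 e12 e23 e03]]].
by rewrite e12 e23 gsym e01 eq_sym h02 h13.
Qed.
End Final.

End G.
Import G.
Module H.

Lemma T2pawfree n : Nsub paw (T2 n) = 0.
Proof.
have := emb_Nsub paw (T2 n).
rewrite T2E (embpaw (@tsym _ (sT (n:=n)))).
rewrite big1; last by move=> ? _; rewrite big1 // => ? _; rewrite big1 // => ? _; rewrite big1 // => ? _; rewrite pawT.
move/esym/eqP; rewrite muln_eq0 => /orP[|/eqP //].
by rewrite eqn0Ngt autset_gt0.
Qed.

Lemma exN_eq (U : finType) (H : rel U) n : 4 <= n ->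
  (forall G : {ffun 'I_n * 'I_n -> bool}, simpleb G -> Nsub paw (Defs.grel G) = 0 ->
     #|embset H (Defs.grel G)| <= #|embset H (T2 n)|) ->
  exN n H paw = Nsub H (T2 n).
Proof.
move=> n4 Hc; apply/eqP; rewrite eqn_leq; apply/andP; split.
  apply/bigmax_leqP => G /andP[simp /eqP nop].
  by rewrite -(leq_pmul2l (autset_gt0 H)) -!emb_Nsub; apply: Hc.
pose GT := [ffun p : 'I_n * 'I_n => T2 n p.1 p.2].
have gE : Defs.grel GT = T2 n.
  by do 2 (apply: functional_extensionality => ?); rewrite /Defs.grel ffunE.
apply: (@leq_trans (Nsub H (Defs.grel GT))); first by rewrite gE.
apply: leq_bigmax_cond; apply/andP; split; last by rewrite gE T2pawfree.
apply/andP; split; apply/forallP => x; [apply/forallP => y|]; rewrite !ffunE /T2 /=.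
  by case: (x < n./2); case: (y < n./2).
by rewrite eqxx.
Qed.

End H.
Import H.

Theorem corollary3p15 :
  (exists n0, forall n, n0 <= n -> exN n P3 paw = Nsub P3 (T2 n)) /\
  (exists n0, forall n, n0 <= n -> exN n P4 paw = Nsub P4 (T2 n)) /\
  (exists n0, forall n, n0 <= n -> exN n C4 paw = Nsub C4 (T2 n)).
Proof.
split; [|split]; exists 4 => n n4; apply: exN_eq => // G simp nop.
- exact: cmpP3.
- exact: cmpP4.
- exact: cmpC4.
Qed.
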